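(* Let $n\geqslant 3$ and fix a caterpillar species tree $S$ with $n$ leaves. Among all caterpillar gene trees $G\neq S$ on the same label set, (i) the largest number of coalescent histories for $(G,S)$ is attained when the roadblock set $B_{G,S}$ consists of the single point $(\frac n2-1,\frac n2-1)$ or $(\frac n2,\frac n2)$ if $n$ is even, or of the single point $(\frac{n-1}{2},\frac{n-1}{2})$ if $n$ is odd; and (ii) this largest number equals $C_{n-1}-C_{\lfloor (n-1)/2\rfloor}C_{\lceil (n-1)/2\rceil}$, where $C_m=\frac{1}{m+1}\binom{2m}{m}$.
   Context: All trees are binary, rooted, leaf-labeled; $G\neq S$ means different labeled topologies. A caterpillar tree with $n$ leaves is one in which some internal node is descended from all other internal nodes. Its canonical label vector $(x_1,\dots,x_n)$ has $x_1,x_2$ the labels of the two cherry leaves and, for $3\leqslant i\leqslant n$, $x_i$ the label of the leaf separated from the root by $n-i+1$ edges. Internal nodes are numbered $1,\dots,n-1$ from cherry to root; internal edge $i$ is the edge above node $i$, with an extra edge $n-1$ above the root. A coalescent history for $(G,S)$ is a map $h$ from internal nodes of $G$ to internal edges of $S$ such that (1) every label of a leaf below node $v$ of $G$ labels a leaf of $S$ below edge $h(v)$, and (2) if $v_2$ is descended from $v_1$ in $G$ then $h(v_2)$ is descended from $h(v_1)$ (objects are descended from themselves). With $\mathbf g,\mathbf s$ the canonical vectors of $G,S$, $\sigma(x)$ the index of $x$ in $\mathbf s$ and $F(j)=\max\{\sigma(g_1),\dots,\sigma(g_{j+1})\}-1$, the roadblock set is $B_{G,S}=\{(i,j)\in\mathbb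 Z^2:1\leqslant j\leqslant i\leqslant n-1,\ i<F(j)\}$. *)

(* Defs.v *)
(* Caterpillar trees on the label set 'I_n, represented by
   their canonical label vectors (x_1,...,x_n), stored 0-based as a
   permutation x : {perm 'I_n} with x_{p+1} = x p. *)
From mathcomp Require Import all_boot all_order all_fingroup.
Set Implicit Arguments. Unset Strict Implicit. Unset Printing Implicit Defensive.

Section Caterpillar.
Variable n : nat.

(* Two canonical vectors describe the same labeled topology iff they have
   the same (unordered) cherry {x_1,x_2} and agree at positions 3..n. *)
Definition same_tree (x y : {perm 'I_n}) : bool :=
  ([set x p | p : 'I_n & (p < 2)%N] == [set y p | p : 'I_n & (p < 2)%N])
  && [forall p : 'I_n, (2 <= p)%N ==> (x p == y p)].

(* Internal edge i of a
   caterpillar is the edge above node i, so the leaves below edge i are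
   node_leaves x i (edge n-1, above the root, lies above all leaves). *)
Definition node_leaves (x : {perm 'I_n}) (j : nat) : {set 'I_n} :=
  [set x p | p : 'I_n & (p < j.+1)%N].
Definition edge_leaves (x : {perm 'I_n}) (i : nat) : {set 'I_n} :=
  node_leaves x i.

(* In a caterpillar, internal node j2 is descended from internal node j1
   iff j2 <= j1; likewise for internal edges (edge i is above node i). *)
Definition cat_desc (j2 j1 : nat) : bool := (j2 <= j1)%N.

(* A coalescent history: internal nodes 1..n-1 of G (ordinal v <-> node v+1)
   mapped to internal edges 1..n-1 of S (ordinal e <-> edge e+1). *)
Definition is_history (G S : {perm 'I_n}) (h : {ffun 'I_n.-1 -> 'I_n.-1}) : bool :=
  [forall v : 'I_n.-1, node_leaves G v.+1 \subset edge_leaves S (h v).+1]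
  && [forall v1 : 'I_n.-1, forall v2 : 'I_n.-1,
        cat_desc v2.+1 v1.+1 ==> cat_desc (h v2).+1 (h v1).+1].

Definition num_histories (G S : {perm 'I_n}) : nat :=
  #|[set h : {ffun 'I_n.-1 -> 'I_n.-1} | is_history G S h]|.

(* sigma(a) = 1-based index of label a in the canonical vector of S. *)
Definition sigma (S : {perm 'I_n}) (a : 'I_n) : nat := (perm_inv S a).+1.

Definition Ffun (G S : {perm 'I_n}) (j : nat) : nat :=
  (\max_(p : 'I_n | (p < j.+1)%N) sigma S (G p)) - 1.

Definition roadblock (G S : {perm 'I_n}) : pred (nat * nat) :=
  fun ij => [&& (1 <= ij.2)%N, (ij.2 <= ij.1)%N, (ij.1 <= n - 1)%N
              & (ij.1 < Ffun G S ij.2)%N].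

End Caterpillar.

Definition catalan (m : nat) : nat := 'C(m.*2, m) %/ m.+1.

Definition opt_point (n k : nat) : bool :=
  if odd n then k == (n - 1)./2 else (k == n./2 - 1) || (k == n./2).

(* Main.v *)
Require Import Defs.
From mathcomp Require Import all_boot all_order all_fingroup.
From mathcomp Require Import zify.
Set Implicit Arguments. Unset Strict Implicit. Unset Printing Implicit Defensive.

Fixpoint Q (o l t : nat) : nat :=
  if l is l'.+1 then \sum_(o + l' <= s < t.+1) Q o l' s else 1.

Lemma QS o l t : Q o l.+1 t = \sum_(o + l <= s < t.+1) Q o l s.
Proof. by []. Qed.

Lemma Q_shift o l t : Q o l (t + o) = Q 0 l t.
Proof.
elim: l t => [//|l IH] t.
rewrite !QS add0n [o + l]addnC big_addn.
have -> : (t + o).+1 - o = t.+1 by lia.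
by apply: eq_bigr => s _; rewrite IH.
Qed.

Lemma A_closed l t : l <= t ->
  Q 0 l.+1 t + 'C(t + l.+2, l) = 'C(t + l.+2, l.+1).
Proof.
elim: l t => [|l IHl] t.
  move=> _; rewrite QS add0n bin0.
  rewrite (eq_bigr (fun _ => 1)) // sum_nat_const_nat bin1; lia.
move=> hlt; elim: t hlt => [//|t IHt] hlt.
have [h|h] : l < t \/ l = t by lia.
  have IH1 := IHt h.
  have IH2 := IHl t.+1 (ltnW (ltnW h : l < t.+1)).
  rewrite QS add0n big_nat_recr; last by lia.
  rewrite -(add0n l.+1) -QS add0n.
  change (Q 0 l.+2 t + Q 0 l.+1 t.+1 + 'C(t.+1 + l.+3, l.+1) = 'C(t.+1 + l.+3, l.+2)).
  have e1 : t.+1 + l.+3 = (t + l.+3).+1 by lia.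
  have e2 : t.+1 + l.+2 = (t + l.+3) by lia.
  rewrite e2 in IH2.
  rewrite e1 !binS.
  lia.
subst t.
rewrite QS add0n big_nat1.
have IH2 := IHl l.+1 (leqnSn l).
have e : l.+1 + l.+3 = (l.+1 + l.+2).+1 by lia.
have sym : 'C(l.+1 + l.+2, l.+2) = 'C(l.+1 + l.+2, l.+1).
  rewrite -bin_sub; last by lia.
  by have -> : l.+1 + l.+2 - l.+2 = l.+1 by lia.
rewrite e.
have e3 : l.+1 + l.+2 = l + l.+3 by lia.
rewrite e3 in IH2 sym *.
move: IH2 sym; set K := l + l.+3 => IH2 sym.
rewrite !binS. lia.
Qed.


Lemma binC_cat x : 'C(x.*2, x) = x.+1 * Q 0 x x.-1.
Proof.
case: x => [//|x].
have h := A_closed (leqnn x).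
have e : x + x.+2 = x.+1.*2 by rewrite -addnn; lia.
rewrite e in h.
have hb := mul_bin_left x.+1.*2 x.
have e2 : x.+1.*2 - x = x.+2 by lia.
rewrite e2 in hb.
move: h hb; set c := 'C(_, x.+1); set d := 'C(_, x); set a := Q 0 x.+1 x => h hb.
rewrite -h in hb *.
have hd : d = x.+1 * a by rewrite mulnDr !mulSn in hb; lia.
rewrite hd mulSn; lia.
Qed.

Lemma catalanE x : catalan x = Q 0 x x.-1.
Proof. by rewrite /catalan binC_cat mulKn. Qed.

Lemma catalan_rec a : a.+2 * catalan a.+1 = 2 * (a.*2.+1) * catalan a.
Proof.
have key : forall x, 'C(x.*2, x) = x.+1 * catalan x.
  by move=> x; rewrite catalanE binC_cat.
have h1 := mul_bin_diag (a.+1.*2) a.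
have h2 := mul_bin_down (a.*2.+1) a.
have e1 : (a.+1.*2).-1 = a.*2.+1 by rewrite doubleS.
have e2 : a.*2.+1 - a = a.+1 by lia.
rewrite e1 in h1; rewrite e2 /= in h2.
rewrite !key in h1 h2.
move: h1 h2; set C1 := catalan a.+1; set C0 := catalan a; set B := 'C(a.*2.+1, a) => h1 h2.
apply/eqP; rewrite -(eqn_pmul2l (ltn0Sn a)) -(eqn_pmul2l (ltn0Sn a)); apply/eqP.
rewrite -h1.
have -> : a.+1 * (a.+1.*2 * B) = 2 * a.+1 * (a.+1 * B) by rewrite -mul2n; nia.
rewrite -h2. rewrite -mul2n. nia.
Qed.

Lemma cat_swap a c : a <= c -> catalan a.+1 * catalan c <= catalan a * catalan c.+1.
Proof.
move=> hac.
have pos : 0 < a.+2 * c.+2 by [].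
rewrite -(leq_pmul2l pos).
have ra := catalan_rec a; have rc := catalan_rec c.
move: ra rc; set A1 := catalan a.+1; set A0 := catalan a; set C1 := catalan c.+1;
  set C0 := catalan c => ra rc.
have L : a.+2 * c.+2 * (A1 * C0) = (c.+2 * (2 * a.*2.+1)) * (A0 * C0).
  have -> : a.+2 * c.+2 * (A1 * C0) = c.+2 * (a.+2 * A1) * C0 by nia.
  rewrite ra; nia.
have R : a.+2 * c.+2 * (A0 * C1) = (a.+2 * (2 * c.*2.+1)) * (A0 * C0).
  have -> : a.+2 * c.+2 * (A0 * C1) = a.+2 * (c.+2 * C1) * A0 by nia.
  rewrite rc; nia.
rewrite L R leq_mul2r; apply/orP; right; nia.
Qed.

Lemma cat_min N j : j <= N ->
  catalan (N./2) * catalan (uphalf N) <= catalan j * catalan (N - j).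
Proof.
move=> hjN.
have hN := odd_double_half N.
have hu := uphalf_half N.
have eu : uphalf N = N - N./2 by lia.
rewrite eu.
have step : forall j, j.+1 <= N./2 ->
    catalan j.+1 * catalan (N - j.+1) <= catalan j * catalan (N - j).
  move=> i hi.
  have e : N - i = (N - i.+1).+1 by lia.
  rewrite e; apply: cat_swap; lia.
have down : forall d i, i + d = N./2 ->
    catalan (N./2) * catalan (N - N./2) <= catalan i * catalan (N - i).
  elim=> [|d IH] i hi; first by rewrite addn0 in hi; rewrite hi.
  apply: leq_trans (IH i.+1 _) (step i _); lia.
have [hj|hj] := leqP j (N./2).
  by apply: (down (N./2 - j)); lia.
have := down (N./2 - (N - j)) (N - j).
rewrite subKn // => H. rewrite [X in _ <= X]mulnC. apply: H; lia.
Qed.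

Definition goodf k N (f : nat -> nat) (t : nat) (h : {ffun 'I_k -> 'I_N}) : bool :=
  [forall i : 'I_k, forall j : 'I_k, (i <= j) ==> (h i <= h j)]
  && [forall i : 'I_k, (f i <= h i) && (h i <= t)].

Definition cnt k N f t := #|[set h : {ffun 'I_k -> 'I_N} | goodf f t h]|.

Lemma goodfP k N (f : nat -> nat) t (h : {ffun 'I_k -> 'I_N}) :
  reflect ((forall i j : 'I_k, i <= j -> h i <= h j) /\
           (forall i : 'I_k, f i <= h i /\ h i <= t)) (goodf f t h).
Proof.
apply: (iffP andP) => [[/forallP M /forallP B]|[M B]]; split.
- by move=> i j hij; have /forallP/(_ j)/implyP := M i; apply.
- by move=> i; have /andP[] := B i.
- by apply/forallP=> i; apply/forallP=> j; apply/implyP; apply: M.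
- by apply/forallP=> i; have [] := B i => -> ->.
Qed.

Lemma cnt0 N (f : nat -> nat) t : cnt 0 N f t = 1.
Proof.
rewrite /cnt (eq_card (B := {ffun 'I_0 -> 'I_N})); first by rewrite card_ffun !card_ord.
move=> h; rewrite !inE; apply/goodfP; split; by case.
Qed.

Section Ext.
Variables (k N : nat).
Definition ext (p : 'I_N * {ffun 'I_k -> 'I_N}) : {ffun 'I_k.+1 -> 'I_N} :=
  [ffun i => if unlift ord_max i is Some j then p.2 j else p.1].
Definition res (h : {ffun 'I_k.+1 -> 'I_N}) : 'I_N * {ffun 'I_k -> 'I_N} :=
  (h ord_max, [ffun j => h (lift ord_max j)]).

Lemma extE1 p j : ext p (lift ord_max j) = p.2 j.
Proof. by rewrite ffunE liftK. Qed.
Lemma extE2 p : ext p ord_max = p.1.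
Proof. by rewrite ffunE unlift_none. Qed.

Lemma ext_bij : bijective ext.
Proof.
exists res.
  by case=> s g; rewrite /res extE2; congr pair; apply/ffunP => j; rewrite ffunE extE1.
move=> h; apply/ffunP => i; rewrite ffunE /res /=.
by case: unliftP => [j ->|->] //; rewrite ffunE.
Qed.

Lemma good_ext (f : nat -> nat) t p :
  goodf f t (ext p) = (f k <= p.1 <= t) && goodf f p.1 p.2.
Proof.
case: p => s g /=.
apply/goodfP/andP => [[M B]|[/andP[h1 h2] /goodfP[M B]]].
  split.
    by have [] := B ord_max; rewrite extE2 /= => -> ->.
  apply/goodfP; split.
    by move=> i j hij; have := M (lift ord_max i) (lift ord_max j); rewrite !extE1 !lift_max /=; apply.
  move=> i; have [] := B (lift ord_max i); rewrite extE1 lift_max => -> _; split=> //.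
  by have := M (lift ord_max i) ord_max; rewrite extE1 extE2 lift_max /=; apply; apply: ltnW.
split.
  move=> i j; case: (unliftP ord_max i) => [i' ->|->]; case: (unliftP ord_max j) => [j' ->|->];
    rewrite ?extE1 ?extE2 ?lift_max /=.
  - exact: M.
  - by move=> _; have [] := B i'.
  - by move=> hle; exfalso; move: hle; rewrite leqNgt /= ltn_ord.
  - by [].
move=> i; case: (unliftP ord_max i) => [i' ->|->]; rewrite ?extE1 ?extE2 ?lift_max /=.
  have [-> hs] := B i'; split => //; exact: leq_trans hs h2.
by split.
Qed.
End Ext.

Lemma cntS k N (f : nat -> nat) t : t < N ->
  cnt k.+1 N f t = \sum_(f k <= s < t.+1) cnt k N f s.
Proof.
move=> htN.
rewrite /cnt -sum1_card.
rewrite (eq_bigl (fun h => goodf f t h)); last by move=> h; rewrite inE.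
rewrite (reindex (@ext k N)); last by apply: onW_bij; apply: ext_bij.
rewrite (eq_bigl (fun p : 'I_N * {ffun 'I_k -> 'I_N} => (f k <= p.1 <= t) && goodf f p.1 p.2)); last by move=> p; rewrite good_ext.
rewrite -(pair_big_dep (fun s : 'I_N => f k <= s <= t) (fun s g => goodf f s g) (fun _ _ => 1)) /=.
rewrite (eq_bigr (fun s : 'I_N => #|[set h : {ffun 'I_k -> 'I_N} | goodf f s h]|)); last first.
  by move=> s _; rewrite -sum1_card; apply: eq_bigl => h; rewrite inE.
rewrite -(big_mkord (fun s => f k <= s <= t) (fun s => #|[set h : {ffun 'I_k -> 'I_N} | goodf f s h]|)).
rewrite [RHS](big_nat_widenl _ 0) // [RHS](big_nat_widen _ _ N) //.
Qed.

Lemma cnt_ext k N (f1 f2 : nat -> nat) t : (forall v, v < k -> f1 v = f2 v) ->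
  cnt k N f1 t = cnt k N f2 t.
Proof.
move=> e; apply: eq_card => h; rewrite !inE.
apply/goodfP/goodfP => -[M B]; split=> // i; rewrite ?e // -?e //; exact: B.
Qed.

Lemma cnt_mono k N (f1 f2 : nat -> nat) t : (forall v, v < k -> f1 v <= f2 v) ->
  cnt k N f2 t <= cnt k N f1 t.
Proof.
move=> e; apply: subset_leq_card; apply/subsetP => h; rewrite !inE.
move/goodfP => -[M B]; apply/goodfP; split=> // i.
have [h1 h2] := B i; split=> //; exact: leq_trans (e _ (ltn_ord i)) h1.
Qed.

Lemma cnt_id j N (f : nat -> nat) t : (forall v, v < j -> f v = v) -> t < N ->
  cnt j N f t = Q 0 j t.
Proof.
elim: j t => [|j IH] t e htN; first by rewrite cnt0.
rewrite cntS // QS add0n e //.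
apply: eq_big_nat => s /andP[h1 h2].
apply: IH; last by lia.
by move=> v hv; apply: e; apply: ltnW.
Qed.

Definition fb k0 v := if v == k0 then k0.+1 else v.

Lemma cnt_bump k0 d N t : t < N -> k0 + d <= t ->
  cnt (k0.+1 + d) N (fb k0) t + Q 0 k0 k0 * Q k0.+1 d t = Q 0 (k0.+1 + d) t.
Proof.
elim: d t => [|d IH] t htN hd.
  rewrite addn0 cntS // /fb eqxx [RHS]QS add0n [RHS]big_ltn; last by lia.
  rewrite /= muln1 addnC.
  congr (_ + _).
  apply: eq_big_nat => s /andP[h1 h2]; apply: cnt_id; last by lia.
  by move=> v hv; rewrite (ltn_eqF hv).
rewrite addnS cntS // [RHS]QS add0n QS.
have -> : fb k0 (k0.+1 + d) = k0.+1 + d by rewrite /fb; case: eqP => //; lia.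
rewrite big_distrr -big_split /=.
apply: eq_big_nat => s /andP[h1 h2]; apply: IH; lia.
Qed.

Lemma cnt_final N k : 1 <= k -> k < N ->
  cnt N N (fb k.-1) N.-1 + catalan k * catalan (N - k) = catalan N.
Proof.
move=> hk hkN.
have := @cnt_bump k.-1 (N - k) N N.-1 ltac:(lia) ltac:(lia).
have e1 : k.-1.+1 + (N - k) = N by lia.
rewrite e1 (catalanE N) => <-.
congr (_ + _ * _).
  case: k hk {hkN e1} => // k _ /=.
  by rewrite catalanE /= add0n big_nat1.
have e2 : N.-1 = (N - k).-1 + k.-1.+1 by lia.
by rewrite e2 Q_shift catalanE.
Qed.

Section Trees.
Variable n : nat.
Implicit Types G S : {perm 'I_n}.

Lemma pinvK S x : perm_inv S (S x) = x.
Proof. exact: (permK S x). Qed.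
Lemma pinvKV S x : S (perm_inv S x) = x.
Proof. exact: (permKV S x). Qed.

Definition pi G S (p : 'I_n) : 'I_n := perm_inv S (G p).

Lemma pi_inj G S : injective (pi G S).
Proof. by move=> x y /perm_inj /perm_inj. Qed.

Lemma Ffun_le G S j i :
  (Ffun G S j <= i) = [forall p : 'I_n, (p < j.+1) ==> (pi G S p <= i)].
Proof.
rewrite /Ffun leq_subLR add1n.
apply/bigmax_leqP/forallP => H p.
  by apply/implyP => hp; have := H p hp.
by move=> hp; have /implyP := H p; apply.
Qed.

Lemma subset_iff G S j i :
  (node_leaves G j \subset edge_leaves S i) = (Ffun G S j <= i).
Proof.
rewrite Ffun_le /edge_leaves /node_leaves.
apply/subsetP/forallP => H p.
  apply/implyP => hp.
  have hm : G p \in [set G p0 | p0 : 'I_n & p0 < j.+1] by apply: imset_f; rewrite inE.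
  have := H (G p) hm.
  by case/imsetP => q; rewrite inE => hq e; rewrite /pi e pinvK.
move=> /imsetP [q]; rewrite inE => hq ->.
apply/imsetP; exists (pi G S q); last by rewrite /pi pinvKV.
by rewrite inE; have /implyP := H q; apply.
Qed.

Lemma onto_lem (g : 'I_n -> 'I_n) m : injective g ->
  (forall p : 'I_n, p < m -> g p < m) ->
  forall q : 'I_n, q < m -> exists2 p : 'I_n, p < m & g p = q.
Proof.
move=> ginj H q hq.
set A := [set p : 'I_n | p < m].
have sub : g @: A \subset A.
  by apply/subsetP => x /imsetP [p]; rewrite !inE => hp ->; apply: H.
have := (subset_cardP (card_imset A ginj) sub) q.
rewrite inE hq => /imsetP [p]; rewrite inE => hp ->.
by exists p.
Qed.

Lemma F_ge G S j : j < n -> j <= Ffun G S j.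
Proof.
case: j => [//|j] hj; rewrite leqNgt; apply/negP; rewrite ltnS Ffun_le => /forallP H.
have H' : forall p : 'I_n, p < j.+2 -> pi G S p < j.+2.
  move=> p hp; have /implyP := H p; move/(_ hp); lia.
have [p hp e] := onto_lem (@pi_inj G S) H' (q := Ordinal hj) (ltnSn j.+1).
have /implyP := H p; move/(_ hp); rewrite e /=; lia.
Qed.

Lemma F_le G S j : Ffun G S j <= n.-1.
Proof.
rewrite Ffun_le; apply/forallP => p; apply/implyP => _.
have := ltn_ord (pi G S p); lia.
Qed.

Lemma F_char G S j v :
  (forall p : 'I_n, p < j.+1 -> pi G S p <= v) ->
  (exists2 p : 'I_n, p < j.+1 & pi G S p = v :> nat) ->
  Ffun G S j = v.
Proof.
move=> H [p hp e].
apply/eqP; rewrite eqn_leq Ffun_le; apply/andP; split.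
  by apply/forallP => q; apply/implyP; apply: H.
rewrite /Ffun.
have := @leq_bigmax_cond _ (fun q : 'I_n => q < j.+1) (fun q : 'I_n => sigma S (G q)) p hp.
rewrite /sigma -/(pi G S p) e => h; have := leq_sub2r 1 h; rewrite subn1 /=; exact.
Qed.

Lemma same_of_F G S : 2 <= n ->
  (forall j, 1 <= j -> j < n.-1 -> Ffun G S j <= j) -> same_tree G S.
Proof.
move=> hn H.
have H2 : forall j, 1 <= j -> j < n -> forall p : 'I_n, p <= j -> pi G S p <= j.
  move=> j h1 h2 p hp.
  have : Ffun G S j <= j.
    case: (ltnP j n.-1) => hj; first exact: H.
    by apply: leq_trans (F_le G S j) _.
  by rewrite Ffun_le => /forallP /(_ p) /implyP; apply.
have ons : forall j, 1 <= j -> j < n -> forall q : 'I_n, q < j.+1 ->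
    exists2 p : 'I_n, p < j.+1 & pi G S p = q.
  move=> j h1 h2; apply: onto_lem; first exact: pi_inj.
  by move=> p hp; rewrite ltnS; apply: H2.
have Gp : forall p, G p = S (pi G S p) by move=> p; rewrite /pi pinvKV.
apply/andP; split.
  apply/eqP/setP => x; apply/imsetP/imsetP => -[p]; rewrite inE => hp ->.
    exists (pi G S p); last by rewrite Gp.
    by rewrite inE ltnS; apply: H2 => //; lia.
  have [q hq e] := ons 1 (leqnn 1) hn p hp.
  by exists q; rewrite ?inE // Gp e.
apply/forallP => p; apply/implyP => hp.
have hpn := ltn_ord p.
suff key : pi G S p = p by rewrite Gp key.
apply: val_inj; apply/eqP; rewrite /= eqn_leq H2 //; try lia.
rewrite leqNgt; apply/negP => lt.
have [q hq e] := ons p.-1 ltac:(lia) ltac:(lia) (pi G S p) ltac:(lia).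
have eqp := pi_inj e; move: hq; rewrite eqp; lia.
Qed.

Lemma num_cnt G S : num_histories G S =
  cnt n.-1 n.-1 (fun v => Ffun G S v.+1 - 1) n.-1.-1.
Proof.
apply: eq_card => h; rewrite !inE /is_history.
apply/andP/goodfP => [[/forallP B /forallP M]|[M B]]; split.
- move=> i j hij; have /forallP/(_ i)/implyP := M j; rewrite /cat_desc !ltnS; apply; exact: hij.
- move=> i; have := B i; rewrite subset_iff => hb; split.
    by rewrite leq_subLR add1n.
  by rewrite -ltnS (ltn_predK (ltn_ord (h i))).
- apply/forallP => v; rewrite subset_iff; have [hb _] := B v.
  by move: hb; rewrite leq_subLR add1n.
- apply/forallP => v1; apply/forallP => v2; apply/implyP; rewrite /cat_desc !ltnS; exact: M.
Qed.

Lemma tp_val k (hk : k.+1 < n) (p : 'I_n) :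
  (tperm (Ordinal (ltnW hk)) (Ordinal hk) p : nat) =
  if (p : nat) == k then k.+1 else if (p : nat) == k.+1 then k else p.
Proof.
case: tpermP => [->|->|na nb] /=; rewrite ?eqxx //.
  by case: eqP => //; lia.
case: eqP => [e|_]; first by exfalso; apply: na; apply: val_inj.
case: eqP => [e|_] //; by exfalso; apply: nb; apply: val_inj.
Qed.

Lemma construct S k : 1 <= k -> k.+1 < n ->
  exists G, ~~ same_tree G S /\
   (forall j, j < n -> Ffun G S j = if j == k then k.+1 else j).
Proof.
move=> hk1 hk.
set a := Ordinal (ltnW hk); set b := Ordinal hk.
exists (tperm a b * S)%g.
have piE : forall p, (pi (tperm a b * S)%g S p : nat) =
    if (p : nat) == k then k.+1 else if (p : nat) == k.+1 then k else p.
  by move=> p; rewrite /pi permM pinvK tp_val.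
split.
  apply/negP => /andP [_ /forallP /(_ b)]; rewrite /= ltnS hk1 /= => /eqP.
  rewrite permM => /perm_inj; rewrite tpermR => /(congr1 val) /=; lia.
move=> j hj; apply: F_char.
  move=> p hp; rewrite piE; case: eqP => [ep|np]; first by case: eqP; lia.
  by case: eqP => ?; case: eqP => ?; lia.
case: (ltngtP j k) => hjk.
- exists (Ordinal hj) => //; rewrite piE /=; case: (j =P k) => ?; case: (j =P k.+1) => ?; lia.
- case: (eqVneq j k.+1) => [ej|nj].
    exists a; rewrite ?piE /= ?eqxx; case: (j =P k) => ?; lia.
  exists (Ordinal hj) => //; rewrite piE /=; case: (j =P k) => ?; case: (j =P k.+1) => ?; lia.
- exists a; rewrite ?piE /= ?eqxx; case: (j =P k) => ?; lia.
Qed.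

End Trees.

Lemma opt_facts n k : 3 <= n -> opt_point n k ->
  [/\ 1 <= k, k.+1 < n &
     catalan k * catalan (n.-1 - k) = catalan (n.-1)./2 * catalan (uphalf n.-1)].
Proof.
case: n => [//|N] /= hN; rewrite /opt_point /= subn1 /=.
have h1 := odd_double_half N.
have h2 := uphalf_half N.
have h3 : N.+1./2 = uphalf N by rewrite uphalfE.
case hod : (odd N) h1 h2 => /= h1 h2.
  case/orP => /eqP ->.
    have -> : uphalf N - 1 = N./2 by lia.
    split; try lia. by congr (_ * _); congr catalan; lia.
  split; try lia. rewrite mulnC; congr (_ * _); congr catalan; lia.
move=> /eqP ->; split; try lia.
congr (_ * _); congr catalan; lia.
Qed.

Theorem corollary2 (n : nat) (Hn : (3 <= n)%N) (S : {perm 'I_n}) :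
  (* the largest number of histories over caterpillar G <> S is at most M ... *)
  (forall G : {perm 'I_n}, ~~ same_tree G S ->
     (num_histories G S <= catalan (n - 1)
        - catalan ((n - 1)./2) * catalan (uphalf (n - 1)))%N)
  (* ... the optimal roadblock configurations occur among G <> S ... *)
  /\ (forall k, opt_point n k ->
        exists G : {perm 'I_n}, ~~ same_tree G S /\ roadblock G S =1 pred1 (k, k))
  (* ... and every such G attains M. *)
  /\ (forall (G : {perm 'I_n}) (k : nat), ~~ same_tree G S -> opt_point n k ->
        roadblock G S =1 pred1 (k, k) ->
        num_histories G S = catalan (n - 1)
          - catalan ((n - 1)./2) * catalan (uphalf (n - 1))).
Proof.
rewrite subn1.
split; [|split].
- move=> G nst.
  case: (boolP [exists j : 'I_(n.-1), (1 <= j) && (j < Ffun G S j)]); last first.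
    move=> /existsPn nex; exfalso; move/negP: nst; apply.
    apply: same_of_F; first by lia.
    move=> j h1 h2; have := nex (Ordinal h2); rewrite /= h1 /= => /negP hn.
    by rewrite leqNgt; apply/negP.
  case/existsP => -[j hj] /= /andP[h1 h2].
  have hjN : j < n.-1 by [].
  rewrite num_cnt.
  have hm : cnt n.-1 n.-1 (fun v => Ffun G S v.+1 - 1) n.-1.-1 <=
            cnt n.-1 n.-1 (fb j.-1) n.-1.-1.
    apply: cnt_mono.
    move=> v hv; rewrite /fb; case: eqP => [ev|nv].
      have -> : v.+1 = j by lia.
      lia.
    have := F_ge G S (j := v.+1) ltac:(lia); lia.
  apply: leq_trans hm _.
  have := cnt_final (N := n.-1) h1 hjN => e.
  have hle := @cat_min (n.-1) j (ltnW hjN).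
  lia.
- move=> k hop; have [hk1 hk2 _] := opt_facts Hn hop.
  have [G [nst HF]] := construct S hk1 hk2.
  exists G; split => //.
  case=> i j; rewrite /roadblock /= subn1.
  apply/idP/idP.
    case/and4P => a b c d.
    rewrite HF in d; last by lia.
    move: d; case: (j =P k) => e d; apply/eqP; congr pair; lia.
  move/eqP => [-> ->]; rewrite HF; last by lia.
  rewrite eqxx; apply/and4P; split => //; lia.
- move=> G k nst hop HR.
  have [hk1 hk2 hcat] := opt_facts Hn hop.
  have inR : forall i j, (roadblock G S (i, j)) = ((i, j) == (k, k)) by move=> i j; rewrite HR.
  have Fj : forall j, 1 <= j -> j < n -> j != k -> Ffun G S j = j.
    move=> j a b c; apply/eqP; rewrite eqn_leq F_ge // andbT.
    have := inR j j; rewrite /roadblock /= subn1 a leqnn /= xpair_eqE (negbTE c) /=.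
    have -> : j <= n.-1 by lia.
    by rewrite /= => /negbT; rewrite -leqNgt.
  have Fk : Ffun G S k = k.+1.
    have := inR k k; rewrite /roadblock /= subn1 hk1 leqnn !eqxx /=.
    have -> : k <= n.-1 by lia.
    move=> /= hlt.
    have := inR k.+1 k; rewrite /roadblock /= subn1 hk1 leqnSn xpair_eqE /=.
    rewrite (gtn_eqF (ltnSn k)) /=.
    have -> : k.+1 <= n.-1 by lia.
    move=> /= /negbT; rewrite -leqNgt => hle; apply/eqP; rewrite eqn_leq hle; exact: hlt.
  rewrite num_cnt (@cnt_ext _ _ _ (fb k.-1)); last first.
    move=> v hv; rewrite /fb; case: eqP => [ev|nv].
      have -> : v.+1 = k by lia.
      rewrite Fk; lia.
    rewrite Fj; lia.
  have := cnt_final (N := n.-1) hk1 ltac:(lia) => e.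
  by rewrite -e -hcat addnK.
Qed.
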